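(* Let $G$ be a connected graph. For any $s,t,p,q\in V(G)$, $$t(G)\,t(G_{pq,st})=t(G_{st})\,t(G_{pq})-\frac14\big[t(G_{ps})-t(G_{qs})-t(G_{pt})+t(G_{qt})\big]^2.$$ In particular, for any $s,p,q\in V(G)$, $$t(G)\,t(G_{pqs})=t(G_{ps})\,t(G_{pq})-\frac14\big[t(G_{ps})-t(G_{qs})+t(G_{pq})\big]^2.$$
   Context: Graphs are finite and may have multiple edges and loops; $t(H)$ is the number of spanning trees of $H$; a graph with one vertex has $t=1$. For vertices $x,y$ of a graph $H$, $H_{xy}$ is obtained by identifying $x$ and $y$, with the convention $t(H_{xx}):=0$. $G_{pq,st}$ is the graph obtained from $G_{pq}$ by identifying $s$ and $t$ (so $G_{pq,st}=(G_{pq})_{st}$), and $G_{pqs}$ is obtained from $G$ by identifying $p$, $q$ and $s$ into one vertex (i.e. $G_{pqs}=G_{pq,ps}$). *)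

(* Defs.v *)
From mathcomp Require Import all_boot all_order all_algebra.
Set Implicit Arguments. Unset Strict Implicit. Unset Printing Implicit Defensive.

(* A finite multigraph (loops and parallel edges allowed) is given by an
   ambient finite type V, a vertex set A : {set V}, a finite edge type E and
   an endpoint map g : E -> V * V (orientation irrelevant). *)

Section Graphs.
Variables (V E : finType).

Definition adj (g : E -> V * V) (F : {set E}) : rel V :=
  [rel x y | [exists e in F, (g e == (x, y)) || (g e == (y, x))]].

Definition wf_graph (A : {set V}) (g : E -> V * V) : Prop :=
  forall e, (g e).1 \in A /\ (g e).2 \in A.

Definition connected_graph (A : {set V}) (g : E -> V * V) : Prop :=
  forall x y, x \in A -> y \in A -> connect (adj g setT) x y.

Definition spanning_connected (A : {set V}) (g : E -> V * V) (F : {set E}) : bool :=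
  [forall x in A, forall y in A, connect (adj g F) x y].

(* F is acyclic: no edge of F lies on a cycle of F, i.e. the endpoints of
   each e in F are not connected in F \ {e} (a loop is a cycle). *)
Definition acyclic (g : E -> V * V) (F : {set E}) : bool :=
  [forall e in F, ~~ connect (adj g (F :\ e)) (g e).1 (g e).2].

Definition spanning_tree (A : {set V}) (g : E -> V * V) (F : {set E}) : bool :=
  spanning_connected A g F && acyclic g F.

Definition ntrees (A : {set V}) (g : E -> V * V) : nat :=
  #|[set F : {set E} | spanning_tree A g F]|.

Definition merge (x y : V) (v : V) : V := if v == y then x else v.

Definition merge_graph (x y : V) (g : E -> V * V) : E -> V * V :=
  fun e => (merge x y (g e).1, merge x y (g e).2).

(* t(H_xy), with the convention t(H_xx) = 0 *)
Definition t_id (A : {set V}) (g : E -> V * V) (x y : V) : nat :=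
  if x == y then 0 else ntrees (A :\ y) (merge_graph x y g).

(* t(H_{pq,st}) = t((H_pq)_st), where s,t are taken as vertices of H_pq;
   with the convention t(H_xx) = 0 at each step. *)
Definition t_id2 (A : {set V}) (g : E -> V * V) (p q s t : V) : nat :=
  if p == q then 0
  else t_id (A :\ q) (merge_graph p q g) (merge p q s) (merge p q t).

End Graphs.

(* Main.v *)
Require Import Defs.
From mathcomp Require Import all_boot all_order all_algebra.
From Stdlib Require Import FunctionalExtensionality.
From mathcomp Require Import ring.
Import GRing.Theory Num.Theory.

Set Implicit Arguments. Unset Strict Implicit. Unset Printing Implicit Defensive.

Lemma connect_ind' (T : finType) (R : rel T) (P : T -> Prop) a :
  P a -> (forall v w, P v -> R v w -> P w) -> forall b, connect R a b -> P b.
Proof.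
move=> Pa st b /connectP [p]; elim: p a Pa => [|c p IH] a Pa /=.
  by move=> _ ->.
by case/andP=> Rac pth lst; apply: (IH c (st _ _ Pa Rac)).
Qed.

Section Comb.
Variables (V E : finType).
Implicit Types (g : E -> V * V) (F D : {set E}) (A : {set V}).

Lemma adjP g F u v :
  reflect (exists2 f, f \in F & (g f == (u, v)) || (g f == (v, u))) (adj g F u v).
Proof.
apply: (iffP existsP) => [[f /andP [fF H]]|[f fF H]]; first by exists f.
by exists f; rewrite fF.
Qed.

Lemma adj_sym g F : symmetric (adj g F).
Proof.
move=> u v; apply/adjP/adjP => -[f fF H]; exists f => //; by rewrite orbC.
Qed.

Lemma connect_symg g F u v : connect (adj g F) u v = connect (adj g F) v u.
Proof. exact: (sym_connect_sym (adj_sym g F)). Qed.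

Lemma adj_edge g F f : f \in F -> adj g F (g f).1 (g f).2.
Proof. by move=> fF; apply/adjP; exists f => //; rewrite -surjective_pairing eqxx. Qed.

Lemma connect_mono g F F' u v : F \subset F' ->
  connect (adj g F) u v -> connect (adj g F') u v.
Proof.
move=> sFF'; apply: (connect_ind' (P := fun w => connect (adj g F') u w)) => //.
move=> a b Hab /adjP [f fF H]; apply: (connect_trans Hab); apply: connect1.
by apply/adjP; exists f => //; apply: (subsetP sFF').
Qed.

Lemma adj_pair g F f u v : f \in F -> (g f == (u, v)) || (g f == (v, u)) ->
  adj g F u v.
Proof. by move=> fF H; apply/adjP; exists f. Qed.

Definition ntreesD A g D :=
  #|[set F : {set E} | (F \subset D) && spanning_tree A g F]|.

Lemma ntreesE A g : ntrees A g = ntreesD A g setT.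
Proof. by rewrite /ntrees /ntreesD; apply: eq_card => F; rewrite !inE subsetT. Qed.

Lemma setU1D1 (T : finType) (a c : T) (B : {set T}) :
  a != c -> (a |: B) :\ c = a |: (B :\ c).
Proof.
move=> ac; apply/setP => z; rewrite !inE.
by case: (z =P a) => [->|/eqP/negbTE za]; rewrite ?eqxx ?ac ?za.
Qed.

Lemma loop_rem A g D e : (g e).1 = (g e).2 -> ntreesD A g D = ntreesD A g (D :\ e).
Proof.
move=> ge; rewrite /ntreesD; apply: eq_card => F; rewrite !inE subsetD1.
case eF: (e \in F); rewrite ?andbT //=.
rewrite andbF /spanning_tree; suff -> : acyclic g F = false by rewrite !andbF.
apply/negbTE/negP => /forall_inP /(_ e eF); by rewrite ge connect0.
Qed.

Section Merge.
Variables (x y : V).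
Hypothesis hxy : x != y.
Local Notation m := (Defs.merge x y).
Local Notation mg g := (merge_graph x y g).

Lemma mergex : m x = x. Proof. by rewrite /Defs.merge (negbTE hxy). Qed.
Lemma mergey : m y = x. Proof. by rewrite /Defs.merge eqxx. Qed.
Lemma merge_id a : a != y -> m a = a. Proof. by rewrite /Defs.merge => /negbTE ->. Qed.

Lemma connect_homo g F a b :
  connect (adj g F) a b -> connect (adj (mg g) F) (m a) (m b).
Proof.
apply: (connect_ind' (P := fun w => connect (adj (mg g) F) (m a) (m w))) => //.
move=> v w Hv /adjP [f fF H]; apply: (connect_trans Hv); apply: connect1.
apply/adjP; exists f => //; rewrite /Defs.merge_graph.
by case/orP: H => /eqP -> /=; rewrite eqxx ?orbT.
Qed.

Variables (g : E -> V * V) (e : E).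
Hypothesis he : (g e == (x, y)) || (g e == (y, x)).

Lemma same_img F a b : m a = m b -> connect (adj g (e |: F)) a b.
Proof.
have exy : adj g (e |: F) x y by apply: (adj_pair (f := e)); rewrite ?setU11.
rewrite /Defs.merge; case: (a =P y) => [->|ay]; case: (b =P y) => [->|bx] //.
- by move=> <-; apply: connect1; rewrite adj_sym.
- by move=> ->; apply: connect1.
- by move=> ->; apply: connect0.
Qed.

Lemma K F a b :
  connect (adj (mg g) F) (m a) (m b) = connect (adj g (e |: F)) a b.
Proof.
apply/idP/idP.
- move=> H.
  have P0 : forall b', m b' = m a -> connect (adj g (e |: F)) a b'.
    by move=> b' Hb; apply: same_img; rewrite Hb.
  have step : forall v w, (forall b', m b' = v -> connect (adj g (e |: F)) a b') ->
      adj (mg g) F v w -> forall b', m b' = w -> connect (adj g (e |: F)) a b'.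
    move=> v w Hv /adjP [f fF Hf] b'' Hb''.
    rewrite /merge_graph in Hf.
    case/orP: Hf => /eqP [H1 H2].
    * apply: (connect_trans (Hv (g f).1 H1)).
      apply: (connect_trans (y := (g f).2)).
        by apply: connect1; apply: adj_edge; rewrite setU1r.
      by apply: same_img; rewrite H2 Hb''.
    * apply: (connect_trans (Hv (g f).2 H2)).
      apply: (connect_trans (y := (g f).1)).
        by apply: connect1; rewrite adj_sym; apply: adj_edge; rewrite setU1r.
      by apply: same_img; rewrite H1 Hb''.
  exact: (connect_ind' P0 step H).
- apply: (connect_ind' (P := fun w => connect (adj (mg g) F) (m a) (m w))) => //.
  move=> v w Hv /adjP [f]; rewrite in_setU1 => /orP [/eqP ->|fF] H.
  + suff -> : m w = m v by [].
    by case/orP: he => /eqP Ge; rewrite Ge in H; case/orP: H => /eqP [<- <-];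
       rewrite ?mergex ?mergey.
  + apply: (connect_trans Hv); apply: connect1.
    apply/adjP; exists f => //; rewrite /Defs.merge_graph.
    by case/orP: H => /eqP -> /=; rewrite eqxx ?orbT.
Qed.

Lemma span_merge A F : x \in A ->
  spanning_connected (A :\ y) (mg g) F = spanning_connected A g (e |: F).
Proof.
move=> xA.
have mA : forall c, c \in A -> m c \in A :\ y.
  move=> c cA; rewrite /Defs.merge; case: (c =P y) => [_|/eqP cy];
  by rewrite !inE ?hxy ?cy.
apply/forall_inP/forall_inP => H a aA; apply/forall_inP => b bA.
- rewrite -K; exact: (forall_inP (H _ (mA _ aA)) _ (mA _ bA)).
- case/setD1P: aA => ay aA; case/setD1P: bA => bY bA.
  rewrite -(merge_id ay) -(merge_id bY) K.
  exact: (forall_inP (H _ aA) _ bA).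
Qed.

Lemma acyc_merge F : e \notin F ->
  acyclic g (e |: F) = ~~ connect (adj g F) x y && acyclic (mg g) F.
Proof.
move=> eF.
have Ke : ~~ connect (adj g ((e |: F) :\ e)) (g e).1 (g e).2 = ~~ connect (adj g F) x y.
  rewrite setU1K //; case/orP: he => /eqP -> //=; by rewrite connect_symg.
have Kf : forall f, f \in F -> ~~ connect (adj g ((e |: F) :\ f)) (g f).1 (g f).2
    = ~~ connect (adj (mg g) (F :\ f)) (mg g f).1 (mg g f).2.
  move=> f fF; have ef : e != f by apply: contraNneq eF => ->.
  by rewrite setU1D1 // -K.
apply/forall_inP/andP => [H|[H1 /forall_inP H2] f].
- split; first by rewrite -Ke; apply: H; rewrite setU11.
  apply/forall_inP => f fF; rewrite -Kf //; by apply: H; apply: setU1r.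
- rewrite in_setU1 => /orP [/eqP ->|fF]; first by rewrite Ke.
  by rewrite Kf //; apply: H2.
Qed.

Lemma cyc F : connect (adj g F) x y ->
  exists2 f, f \in F & connect (adj (mg g) (F :\ f)) (m (g f).1) (m (g f).2).
Proof.
have [k Hk] : exists k, #|F| < k by exists #|F|.+1.
elim: k F Hk => // k IH F Hk Cxy.
case: (boolP [exists f in F, connect (adj g (F :\ f)) x y]).
- case/exists_inP => f fF Cf.
  have Hk' : #|F :\ f| < k by move: Hk; rewrite (cardsD1 f F) fF add1n ltnS.
  have [f' f'F C'] := IH _ Hk' Cf.
  exists f'; first by move: f'F; rewrite inE => /andP [].
  apply: connect_mono C'; apply: setSD; apply: subD1set.
- move/exists_inPn => Hno.
  have [f fF] : exists f, f \in F.
    have : (y == x) || (F != set0).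
      apply: (connect_ind' (P := fun w => (w == x) || (F != set0)) _ _ Cxy).
        by rewrite eqxx.
      move=> v w _ /adjP [f fF _].
      by apply/orP; right; apply/set0Pn; exists f.
    by rewrite eq_sym (negbTE hxy) /= => /set0Pn.
  set R' := adj g (F :\ f).
  set f1 := (g f).1; set f2 := (g f).2.
  have clos : forall s t, connect (adj g F) s t ->
      connect R' s t || connect R' f1 t || connect R' f2 t.
    move=> s t Cst.
    apply: (connect_ind' (P := fun w => connect R' s w || connect R' f1 w || connect R' f2 w) _ _ Cst).
      by rewrite connect0.
    move=> v w Hv /adjP [f' f'F Hf'].
    case: (f' =P f) => [Ef|/eqP nf].
      rewrite Ef in Hf'; case/orP: Hf' => /eqP Gf.
        by rewrite /f2 Gf /= connect0 !orbT.
      by rewrite /f1 Gf /= connect0 !orbT.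
    have Rvw : R' v w.
      by apply/adjP; exists f' => //; rewrite !inE nf.
    case/orP: Hv => [/orP [H|H]|H]; by rewrite ?(connect_trans H (connect1 Rvw)) ?orbT.
  have Cyx : connect (adj g F) y x by rewrite connect_symg.
  have nxy := Hno f fF.
  have nyx : ~~ connect R' y x by rewrite connect_symg.
  exists f => //.
  have hom : forall a b, connect R' a b -> connect (adj (mg g) (F :\ f)) (m a) (m b).
    by move=> a b; apply: connect_homo.
  have := clos x y Cxy; have := clos y x Cyx.
  rewrite (negbTE nxy) (negbTE nyx) /=.
  have mxy : m x = m y by rewrite mergex mergey.
  case/orP => [H1|H1]; case/orP => [H2|H2].
  + case/negP: nxy; apply: (connect_trans (y := (g f).1)); last exact: H2.
    by rewrite connect_symg.
  + apply: (connect_trans (hom _ _ H1)); rewrite mxy.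
    by apply: hom; rewrite connect_symg.
  + apply: (connect_trans (hom _ _ H2)); rewrite -mxy.
    by apply: hom; rewrite connect_symg.
  + case/negP: nxy; apply: (connect_trans (y := (g f).2)); last exact: H2.
    by rewrite connect_symg.
Qed.

Lemma acyc_noconn F : acyclic (mg g) F -> ~~ connect (adj g F) x y.
Proof.
move=> /forall_inP H; apply/negP => /cyc [f fF C].
by move: (H f fF); rewrite /= C.
Qed.

Lemma tree_merge A F : x \in A -> e \notin F ->
  spanning_tree A g (e |: F) = spanning_tree (A :\ y) (mg g) F.
Proof.
move=> xA eF; rewrite /spanning_tree span_merge // acyc_merge //.
by case Hac: (acyclic (mg g) F); rewrite ?andbF //= (acyc_noconn Hac) andbT.
Qed.

Lemma contract A D : e \in D -> x \in A ->
  ntreesD A g D = ntreesD A g (D :\ e) + ntreesD (A :\ y) (mg g) (D :\ e).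
Proof.
move=> eD xA; rewrite /ntreesD.
set S := [set F : {set E} | _].
rewrite -(cardsID [set F : {set E} | e \in F] S) addnC.
congr (_ + _).
- apply: eq_card => F; rewrite !inE subsetD1.
  by case: (F \subset D) (e \in F) (spanning_tree A g F) => [] [] [].
- have -> : S :&: [set F : {set E} | e \in F] = (fun F0 => e |: F0) @:
      [set F0 : {set E} | (F0 \subset D :\ e) && spanning_tree (A :\ y) (mg g) F0].
    apply/setP => F; rewrite !inE.
    apply/andP/imsetP => [[/andP [sFD tF] eF]|[F0 HF0 ->]].
    + exists (F :\ e); last by rewrite setD1K.
      rewrite inE subsetD1 setD11 andbT -tree_merge ?setD11 // setD1K // tF andbT.
      exact: subset_trans (subD1set F e) sFD.
    + move: HF0; rewrite inE subsetD1 => /andP [/andP [sF0D eF0] tF0].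
      split; last by rewrite setU11.
      rewrite tree_merge // tF0 andbT.
      apply/subsetP => z; rewrite in_setU1 => /orP [/eqP -> //| zF].
      exact: (subsetP sF0D).
  rewrite card_in_imset //.
  move=> F1 F2; rewrite !inE !subsetD1 => /andP [/andP [_ e1] _] /andP [/andP [_ e2] _] H.
  by rewrite -(setU1K e1) -(setU1K e2) /= H.
Qed.
End Merge.
End Comb.

Lemma reroute (V E : finType) (g : E -> V * V) F f a b :
  connect (adj g (F :\ f)) (g f).1 (g f).2 ->
  connect (adj g F) a b -> connect (adj g (F :\ f)) a b.
Proof.
move=> C; apply: (connect_ind' (P := fun w => connect (adj g (F :\ f)) a w)).
  exact: connect0.
move=> v w Hv /adjP [f' f'F H]; apply: (connect_trans Hv).
case: (f' =P f) => [Ef|/eqP nf].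
  rewrite Ef in H; case/orP: H => /eqP Gf; rewrite Gf /= in C => //.
  by rewrite connect_symg.
by apply: connect1; apply/adjP; exists f' => //; rewrite !inE nf.
Qed.

Lemma tree_exists (V E : finType) (A : {set V}) (g : E -> V * V) :
  connected_graph A g -> 0 < ntrees A g.
Proof.
move=> H.
have sc : spanning_connected A g setT.
  by apply/forall_inP => a aA; apply/forall_inP => b bA; exact: H.
case: (arg_minnP (fun F : {set E} => #|F|) sc) => F scF minF.
apply/card_gt0P; exists F; rewrite inE /spanning_tree scF /=.
apply/forall_inP => f fF; apply/negP => C.
have scF' : spanning_connected A g (F :\ f).
  apply/forall_inP => a aA; apply/forall_inP => b bA.
  apply: reroute C _; exact: (forall_inP (forall_inP scF a aA) b bA).
have := minF _ scF'; rewrite (cardsD1 f F) fF add1n.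
by rewrite ltnn.
Qed.

Lemma transport (V E E' : finType) (h : E -> E') (g' : E' -> V * V) (A : {set V}) (D : {set E}) :
  injective h -> ntreesD A g' (h @: D) = ntreesD A (fun e => g' (h e)) D.
Proof.
move=> hinj.
have adjh : forall F : {set E}, adj g' (h @: F) = adj (fun e => g' (h e)) F.
  move=> F; apply: functional_extensionality => u; apply: functional_extensionality => v.
  apply/adjP/adjP => [[f' /imsetP [f fF ->] H]|[f fF H]]; first by exists f.
  by exists (h f); rewrite ?imset_f.
have D1h : forall (F : {set E}) f, (h @: F) :\ h f = h @: (F :\ f).
  move=> F f; apply/setP => z; rewrite !inE.
  apply/andP/imsetP => [[zf /imsetP [f' f'F Ez]]|[f' ]].
    exists f' => //; rewrite !inE f'F andbT; apply: contraNneq zf => Ef.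
    by rewrite Ez Ef.
  rewrite !inE => /andP [nf f'F] ->; split; last exact: imset_f.
  by rewrite (inj_eq hinj).
have treeh : forall F : {set E}, spanning_tree A g' (h @: F) = spanning_tree A (fun e => g' (h e)) F.
  move=> F; rewrite /spanning_tree /spanning_connected adjh; congr andb.
  apply/forall_inP/forall_inP => Hf f.
  - move=> fF; move: (Hf (h f) (imset_f h fF)); by rewrite D1h adjh.
  - move=> /imsetP [f0 f0F ->]; rewrite D1h adjh; exact: Hf.
rewrite /ntreesD -(card_imset _ (imset_inj hinj)).
apply: eq_card => F'; rewrite inE; apply/andP/imsetP.
- move=> [sF'D tF'].
  have eqF : F' = h @: (h @^-1: F').
    apply/setP => z; apply/idP/imsetP => [zF|[f]]; last by rewrite inE => fF ->.
    have /imsetP [f fD Ez] := subsetP sF'D z zF.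
    by exists f => //; rewrite inE -Ez.
  exists (h @^-1: F') => //.
  rewrite inE -treeh -eqF tF' andbT.
  apply/subsetP => f; rewrite inE => hf.
  by rewrite -(mem_imset _ _ hinj); apply: (subsetP sF'D).
- move=> [F]; rewrite inE => /andP [sFD tF] ->; split; first exact: imsetS.
  by rewrite treeh.
Qed.

Definition ext (V E : finType) (g : E -> V * V) (p : V * V) : option E -> V * V :=
  fun o => if o is Some e then g e else p.

Lemma ext_count (V E : finType) (A : {set V}) (g : E -> V * V) u v :
  u \in A -> ntrees A (ext g (u, v)) = ntrees A g + t_id A g u v.
Proof.
move=> uA.
have S : [set: option E] :\ None = Some @: [set: E].
  apply/setP => -[e|]; rewrite !inE ?imset_f ?inE //.
  by apply/esym/imsetP => -[].
rewrite !ntreesE /t_id.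
case: (u =P v) => [<-|/eqP uv].
- rewrite (loop_rem _ _ (e := None)) // S transport; last exact: Some_inj.
  by rewrite addn0.
- have he : (ext g (u, v) None == (u, v)) || (ext g (u, v) None == (v, u)) by rewrite eqxx.
  rewrite (contract uv he) ?inE // S !transport; try exact: Some_inj.
  by rewrite ntreesE.
Qed.

Local Open Scope ring_scope.

Section Mx.
Variables (V E : finType).
Implicit Types (g : E -> V * V) (D : {set E}) (A S : {set V}).

Definition bv g (e : E) (u : V) : rat := (u == (g e).1)%:R - (u == (g e).2)%:R.
Definition Lap g D (u v : V) : rat := \sum_(e in D) bv g e u * bv g e v.
Definition Pad S (L : V -> V -> rat) : 'M[rat]_#|V| :=
  \matrix_(i, j) if (enum_val i \in S) && (enum_val j \in S)
                 then L (enum_val i) (enum_val j) else (i == j)%:R.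

Lemma eq_rank (i : 'I_#|V|) y : (i == enum_rank y) = (enum_val i == y).
Proof. by apply/eqP/eqP => [->|<-]; rewrite ?enum_rankK ?enum_valK. Qed.

Lemma cof_indep n (P Q : 'M[rat]_n) i j :
  (forall a b, a != i -> b != j -> Q a b = P a b) -> cofactor Q i j = cofactor P i j.
Proof.
move=> H; rewrite /cofactor; congr (_ * \det _); apply/matrixP => a b.
by rewrite !mxE; apply: H; rewrite eq_sym neq_lift.
Qed.

Lemma det_add_delta n (P : 'M[rat]_n) i :
  \det (P + delta_mx i i) = \det P + cofactor P i i.
Proof.
rewrite (expand_det_row _ i) (expand_det_row P i).
have -> : \sum_j (P + delta_mx i i) i j * cofactor (P + delta_mx i i) i j
    = \sum_j (P i j * cofactor P i j + (j == i)%:R * cofactor P i j).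
  apply: eq_bigr => j _; rewrite (@cof_indep _ P); last first.
    by move=> a b ai _; rewrite !mxE (negbTE ai) addr0.
  by rewrite !mxE eqxx /= mulrDl.
rewrite big_split /=; congr (_ + _); rewrite (bigD1 i) //= eqxx mul1r big1 ?addr0 // => j /negbTE ->.
by rewrite mul0r.
Qed.

Lemma sum_ind S a :
  \sum_(i < #|V|) ((enum_val i \in S)%:R * (enum_val i == a)%:R : rat) = (a \in S)%:R.
Proof.
rewrite (bigD1 (enum_rank a)) //= enum_rankK eqxx mulr1 big1 ?addr0 // => i ni.
suff -> : (enum_val i == a) = false by rewrite mulr0.
by apply/negbTE; apply: contra ni => /eqP <-; rewrite enum_valK.
Qed.


Lemma Lap_D1 g D e u v : e \in D -> Lap g D u v = Lap g (D :\ e) u v + bv g e u * bv g e v.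
Proof. by move=> eD; rewrite /Lap (big_setD1 e eD) addrC. Qed.

Lemma Pad_set S S' L L' : S = S' ->
  (forall u v, u \in S -> v \in S -> L u v = L' u v) -> Pad S L = Pad S' L'.
Proof.
move=> <- H; apply/matrixP => i j; rewrite !mxE; case: ifP => // /andP [iS jS].
exact: H.
Qed.

Lemma bv_merge g r y f u : u != r -> u != y -> bv (merge_graph r y g) f u = bv g f u.
Proof.
move=> ur uy; rewrite /bv /merge_graph /=.
have H : forall a, (u == Defs.merge r y a) = (u == a).
  move=> a; rewrite /Defs.merge; case: (a =P y) => [->|//].
  by rewrite (negbTE ur) (negbTE uy).
by rewrite !H.
Qed.

Lemma wf_merge A g r y : wf_graph A g -> r \in A -> r != y ->
  wf_graph (A :\ y) (merge_graph r y g).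
Proof.
move=> wf rA ry f; rewrite /merge_graph /=.
have mA : forall c, c \in A -> Defs.merge r y c \in A :\ y.
  move=> c cA; rewrite /Defs.merge; case: (c =P y) => [_|/eqP cy];
  by rewrite !inE ?ry ?cy.
by case: (wf f) => H1 H2; split; apply: mA.
Qed.

Theorem matrix_tree A g D r : wf_graph A g -> r \in A ->
  (ntreesD A g D)%:R = \det (Pad (A :\ r) (Lap g D)).
Proof.
have [k Hk] : exists k, (#|D| < k)%N by exists #|D|.+1.
elim: k A g D r Hk => // k IH A g D r Hk wf rA.
case: (boolP [exists e in D, ((g e).1 == r) || ((g e).2 == r)]).
- case/exists_inP => e eD He.
  have Hk' : (#|D :\ e| < k)%N by move: Hk; rewrite (cardsD1 e D) eD add1n ltnS.
  have [y hy] : exists y, (g e == (r, y)) || (g e == (y, r)).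
    case/orP: He => /eqP H; [exists (g e).2 | exists (g e).1];
    by rewrite -H -surjective_pairing eqxx ?orbT.
  case: (y =P r) => [Eyr|/eqP yr].
  + have loop : (g e).1 = (g e).2.
      by rewrite Eyr in hy; case/orP: hy => /eqP ->.
    rewrite (loop_rem A D loop) (IH A g (D :\ e) r Hk' wf rA).
    congr (\det _); apply: Pad_set => // u v _ _.
    by rewrite (Lap_D1 _ _ _ eD) /bv loop subrr mul0r addr0.
  + have ry : r != y by rewrite eq_sym.
    have rAy : r \in A :\ y by rewrite !inE ry rA.
    have yA : y \in A by case: (wf e); case/orP: hy => /eqP -> /=.
    have yS : y \in A :\ r by rewrite !inE yr yA.
    rewrite (contract ry hy) // natrD (IH A g (D :\ e) r Hk' wf rA).
    rewrite (IH (A :\ y) (merge_graph r y g) (D :\ e) r Hk' (wf_merge wf rA ry) rAy).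
    set P := Pad (A :\ r) (Lap g (D :\ e)).
    have E1 : Pad (A :\ r) (Lap g D) = P + delta_mx (enum_rank y) (enum_rank y).
      apply/matrixP => i j; rewrite !mxE !eq_rank.
      case: ifP => [/andP [iS jS]|nS].
      * rewrite (Lap_D1 _ _ _ eD); congr (_ + _).
        case/setD1P: iS => ir _; case/setD1P: jS => jr _.
        case/orP: hy => /eqP Ge; rewrite /bv Ge /= (negbTE ir) (negbTE jr).
          by rewrite !sub0r mulrNN -natrM mulnb.
        by rewrite !subr0 -natrM mulnb.
      * case: (enum_val i =P y) => [Ei|_]; last by rewrite addr0.
        case: (enum_val j =P y) => [Ej|_]; last by rewrite addr0.
        by rewrite Ei Ej yS in nS.
    rewrite E1 det_add_delta; congr (_ + _).
    set Q := Pad ((A :\ r) :\ y) (Lap g (D :\ e)).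
    have -> : Pad ((A :\ y) :\ r) (Lap (merge_graph r y g) (D :\ e)) = Q.
      apply: Pad_set.
        by apply/setP => z; rewrite !inE; case: (z == r) (z == y) => [] [].
      move=> u v; rewrite !inE => /and3P [ur uy _] /and3P [vr vy _].
      by apply: eq_bigr => f _; rewrite !bv_merge.
    rewrite (expand_det_row Q (enum_rank y)) (bigD1 (enum_rank y)) //= big1; last first.
      move=> j nj; rewrite !mxE enum_rankK !inE eqxx /=.
      by rewrite eq_sym (negbTE nj) mul0r.
    rewrite !mxE enum_rankK !inE eqxx /= eqxx mul1r addr0.
    apply: cof_indep => a b; rewrite !eq_rank !mxE => ay bY.
    by rewrite !inE (negbTE ay) (negbTE bY).
- move/exists_inPn => Hno.
  have noedge : forall F : {set E}, F \subset D -> forall w, connect (adj g F) r w -> w = r.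
    move=> F sFD w C.
    apply: (connect_ind' (P := fun w => w = r) _ _ C) => // v w' -> /adjP [f fF H].
    have := Hno f (subsetP sFD f fF).
    by case/orP: H => /eqP ->; rewrite /= eqxx ?orbT.
  case: (boolP (A :\ r == set0)) => [/eqP A0|/set0Pn [v vA]].
  + have Ar : forall a, a \in A -> a = r.
      move=> a aA; apply/eqP; apply: contraT => ar.
      by have := in_set0 a; rewrite -A0 !inE ar aA.
    have -> : Pad (A :\ r) (Lap g D) = 1%:M.
      by apply/matrixP => i j; rewrite !mxE A0 !inE.
    rewrite det1 /ntreesD.
    suff -> : [set F : {set E} | (F \subset D) && spanning_tree A g F] = [set set0].
      by rewrite cards1.
    apply/setP => F; rewrite !inE; apply/idP/eqP => [/andP [sFD _]|->].
    * apply/setP => f; rewrite inE; apply/negbTE/negP => fF.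
      have [H1 _] := wf f; have := Hno f (subsetP sFD f fF).
      by rewrite (Ar _ H1) eqxx.
    * rewrite sub0set /spanning_tree /spanning_connected /acyclic; rewrite /=; apply/andP; split.
      -- apply/forall_inP => a aA; apply/forall_inP => b bA.
         by rewrite (Ar _ aA) (Ar _ bA) connect0.
      -- by apply/forall_inP => f; rewrite inE.
  + have -> : ntreesD A g D = 0%N.
      apply/eqP; rewrite cards_eq0; apply/eqP/setP => F; rewrite !inE.
      apply/negP => /andP [sFD /andP [sc _]].
      case/setD1P: vA => vr vA'.
      have := noedge F sFD v (forall_inP (forall_inP sc r rA) v vA').
      by move/eqP; rewrite (negbTE vr).
    apply/esym/eqP/det0P.
    exists (\row_j ((enum_val j \in A :\ r)%:R : rat)).
      apply/eqP => /matrixP /(_ 0 (enum_rank v)); rewrite !mxE enum_rankK vA.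
      by move/eqP; rewrite oner_eq0.
    apply/rowP => j; rewrite !mxE.
    under eq_bigr => i _ do rewrite !mxE.
    case jS: (enum_val j \in A :\ r).
    * rewrite (eq_bigr (fun i => (enum_val i \in A :\ r)%:R * Lap g D (enum_val i) (enum_val j))); last first.
        by move=> i _; rewrite andbT; case: (_ \in _); rewrite ?mul0r.
      rewrite /Lap; under eq_bigr => i _ do rewrite big_distrr /=.
      rewrite exchange_big /= big1 // => f fD.
      under eq_bigr => i _ do rewrite mulrA.
      rewrite -big_distrl /=.
      rewrite /bv; under eq_bigr => i _ do rewrite mulrBr.
      rewrite sumrB !sum_ind.
      have := Hno f fD; case: (wf f) => H1 H2; rewrite negb_or => /andP [n1 n2].
      by rewrite !inE n1 n2 H1 H2 subrr mul0r.
    * apply: big1 => i _; case iS: (enum_val i \in A :\ r); rewrite /= ?mul0r //.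
      have : i != j by apply: contraTneq iS => ->; rewrite jS.
      by move/negbTE ->; rewrite mulr0.
Qed.

End Mx.

Lemma sylvester n k (U : 'M[rat]_(n, k)) (W : 'M[rat]_(k, n)) :
  \det (1%:M + U *m W) = \det (1%:M + W *m U).
Proof.
pose X := block_mx 1%:M U (- W) 1%:M.
pose B := block_mx 1%:M 0 W (1%:M : 'M_k).
have d1 : \det B = 1 by rewrite /B det_lblock !det1 mulr1.
have h1 : X *m B = block_mx (1%:M + U *m W) U 0 1%:M.
  rewrite /X /B mulmx_block; congr block_mx.
  - by rewrite mul1mx.
  - by rewrite mulmx0 add0r mulmx1.
  - by rewrite mulmx1 mul1mx addNr.
  - by rewrite mulmx0 add0r mul1mx.
have h2 : B *m X = block_mx 1%:M U 0 (1%:M + W *m U).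
  rewrite /X /B mulmx_block; congr block_mx.
  - by rewrite mul1mx mul0mx addr0.
  - by rewrite mul1mx mul0mx addr0.
  - by rewrite mulmx1 mul1mx addrN.
  - by rewrite mul1mx addrC.
have e1 : \det (X *m B) = \det X by rewrite det_mulmx d1 mulr1.
have e2 : \det (B *m X) = \det X by rewrite det_mulmx d1 mul1r.
move: e1 e2; rewrite h1 h2 !det_ublock !det1 mulr1 mul1r => -> ->.
by [].
Qed.

Lemma rankk n k (M : 'M[rat]_n) (Z : 'M[rat]_(n, k)) : M \in unitmx ->
  \det (M + Z *m Z^T) = \det M * \det (1%:M + Z^T *m invmx M *m Z).
Proof.
move=> Mu.
have -> : M + Z *m Z^T = M *m (1%:M + (invmx M *m Z) *m Z^T).
  by rewrite mulmxDr mulmx1 !mulmxA mulmxV // mul1mx.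
by rewrite det_mulmx (sylvester (invmx M *m Z)) mulmxA.
Qed.

Lemma det2 (N : 'M[rat]_2) :
  \det N = N ord0 ord0 * N (lift ord0 ord0) (lift ord0 ord0)
           - N ord0 (lift ord0 ord0) * N (lift ord0 ord0) ord0.
Proof.
rewrite (expand_det_row _ ord0) !big_ord_recl big_ord0 /cofactor !det_mx11 !mxE /=.
rewrite expr0 expr1 !mul1r addr0 mulN1r mulrN.
have e1 : lift ord0 (0 : 'I_1) = lift ord0 ord0 :> 'I_2 by apply: val_inj.
have e2 : lift (lift ord0 ord0) (0 : 'I_1) = ord0 :> 'I_2 by apply: val_inj.
by rewrite e1 e2.
Qed.

Lemma setT_None (E : finType) : [set: option E] :\ None = Some @: [set: E].
Proof.
apply/setP => -[e|]; rewrite !inE ?imset_f ?inE //.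
by apply/esym/imsetP => -[].
Qed.

Lemma mx11_add1 (X : 'M[rat]_1) : \det (1%:M + X) = 1 + X 0 0.
Proof. by rewrite det_mx11 !mxE. Qed.

Lemma entry_col n k (A1 B1 : 'M[rat]_(n, k)) (Q : 'M[rat]_n) i j :
  (A1^T *m Q *m B1) i j = ((col i A1)^T *m Q *m col j B1) 0 0.
Proof.
rewrite !mxE; apply: eq_bigr => l _; rewrite !mxE; congr (_ * _).
by apply: eq_bigr => m _; rewrite !mxE.
Qed.

Section Gen.
Variables (V E : finType).

Definition bvec (u v : V) (a : V) : rat := (a == u)%:R - (a == v)%:R.
Definition zv (S : {set V}) (c : V -> rat) : 'cV[rat]_#|V| :=
  \col_i (if enum_val i \in S then c (enum_val i) else 0).
Definition wv (S : {set V}) (u : V) := zv S (fun a => (a == u)%:R).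

Lemma Lap_ext (g : E -> V * V) u v a b :
  Lap (ext g (u, v)) setT a b = Lap g setT a b + bvec u v a * bvec u v b.
Proof.
rewrite /Lap (big_setD1 None) ?inE // setT_None big_imset /=; last first.
  by move=> x y _ _ [].
by rewrite addrC.
Qed.

Lemma Pad_add S (L : V -> V -> rat) c :
  Pad S (fun a b => L a b + c a * c b) = Pad S L + zv S c *m (zv S c)^T.
Proof.
apply/matrixP => i j; rewrite !mxE big_ord1 !mxE.
case iS: (enum_val i \in S); case jS: (enum_val j \in S);
  by rewrite /= ?mulr0 ?mul0r ?addr0.
Qed.

Lemma zv_bvec S u v : zv S (bvec u v) = wv S u - wv S v.
Proof. by apply/matrixP => i j; rewrite !mxE; case: ifP; rewrite ?subr0. Qed.

Lemma wf_ext A (g : E -> V * V) u v : wf_graph A g -> u \in A -> v \in A ->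
  wf_graph A (ext g (u, v)).
Proof. by move=> wf uA vA -[e|] //=; apply: wf. Qed.

Lemma Pad_sym S (L : V -> V -> rat) : (forall a b, L a b = L b a) ->
  (Pad S L)^T = Pad S L.
Proof.
move=> H; apply/matrixP => i j; rewrite !mxE andbC eq_sym.
by case: ifP => // _; rewrite H.
Qed.

End Gen.

Section Final.
Variables (V E : finType).
Variables (A : {set V}) (g : E -> V * V) (r : V).
Hypotheses (wf : wf_graph A g) (conn : connected_graph A g) (rA : r \in A).

Local Notation S := (A :\ r).
Local Notation M := (Pad S (Lap g setT)).
Local Notation w := (wv S).
Definition fq (u x : 'cV[rat]_#|V|) := (u^T *m invmx M *m x) 0 0.

Lemma ntrees_det : (ntrees A g)%:R = \det M.
Proof. by rewrite ntreesE (matrix_tree _ wf rA). Qed.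

Lemma Mu : M \in unitmx.
Proof.
rewrite unitmxE unitfE -ntrees_det pnatr_eq0 -lt0n.
exact: tree_exists.
Qed.

Lemma Msym : M^T = M.
Proof. by apply: Pad_sym => a b; rewrite /Lap; apply: eq_bigr => e _; rewrite mulrC. Qed.

Lemma fq_sym u x : fq u x = fq x u.
Proof.
rewrite /fq.
have : (u^T *m invmx M *m x)^T = x^T *m invmx M *m u.
  by rewrite !trmx_mul trmxK trmx_inv Msym mulmxA.
by move/matrixP/(_ 0 0); rewrite mxE => <-.
Qed.

Lemma fqBl u1 u2 x : fq (u1 - u2) x = fq u1 x - fq u2 x.
Proof. by rewrite /fq linearB /= !mulmxBl !mxE. Qed.

Lemma fqBr u x1 x2 : fq u (x1 - x2) = fq u x1 - fq u x2.
Proof. by rewrite /fq !mulmxBr !mxE. Qed.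

Lemma t_id_formula u v : u \in A -> v \in A ->
  (t_id A g u v)%:R = \det M * fq (w u - w v) (w u - w v).
Proof.
move=> uA vA.
have H1 : (ntrees A (ext g (u, v)))%:R = \det M * (1 + fq (w u - w v) (w u - w v)).
  rewrite ntreesE (matrix_tree _ (wf_ext wf uA vA) rA).
  rewrite (Pad_set (S' := S) (L' := fun a b => Lap g setT a b + bvec u v a * bvec u v b)) //;
    last by move=> a b _ _; exact: Lap_ext.
  by rewrite Pad_add zv_bvec (rankk _ Mu) mx11_add1.
move: H1; rewrite ext_count // natrD ntrees_det => /eqP.
by rewrite mulrDr mulr1 (inj_eq (addrI _)) => /eqP.
Qed.


Definition Z2 (z1 z2 : 'cV[rat]_#|V|) : 'M[rat]_(#|V|, 2) :=
  \matrix_(k, i) (if i == ord0 then z1 k 0 else z2 k 0).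

Lemma Z2Z2 z1 z2 : Z2 z1 z2 *m (Z2 z1 z2)^T = z1 *m z1^T + z2 *m z2^T.
Proof.
by apply/matrixP => a b; rewrite !mxE !big_ord_recl big_ord0 !mxE /= addr0 !big_ord0 !addr0.
Qed.

Lemma col_Z2_0 z1 z2 : col ord0 (Z2 z1 z2) = z1.
Proof. by apply/matrixP => a b; rewrite !mxE eqxx (ord1 b). Qed.

Lemma col_Z2_1 z1 z2 : col (lift ord0 ord0) (Z2 z1 z2) = z2.
Proof. by apply/matrixP => a b; rewrite !mxE /= (ord1 b). Qed.

Lemma rank2 z1 z2 :
  \det (M + z1 *m z1^T + z2 *m z2^T)
  = \det M * ((1 + fq z1 z1) * (1 + fq z2 z2) - fq z1 z2 * fq z2 z1).
Proof.
rewrite -addrA -Z2Z2 (rankk _ Mu) det2.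
have Ee : forall i j, (1%:M + (Z2 z1 z2)^T *m invmx M *m Z2 z1 z2) i j
    = (i == j)%:R + fq (col i (Z2 z1 z2)) (col j (Z2 z1 z2)).
  by move=> i j; rewrite mxE [1%:M _ _]mxE entry_col.
by rewrite !Ee col_Z2_0 col_Z2_1 /= !add0r.
Qed.

Lemma t_id_ext p q s t : p \in A -> q \in A -> s \in A -> t \in A ->
  t_id A (ext g (s, t)) p q = (t_id A g p q + t_id2 A g p q s t)%N.
Proof.
move=> pA qA sA tA; rewrite /t_id /t_id2; case: (p =P q) => // /eqP pq.
have -> : merge_graph p q (ext g (s, t))
    = ext (merge_graph p q g) (Defs.merge p q s, Defs.merge p q t).
  by apply: functional_extensionality => -[e|].
have mA : forall c, c \in A -> Defs.merge p q c \in A :\ q.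
  move=> c cA; rewrite /Defs.merge; case: (c =P q) => [_|/eqP cy];
  by rewrite !inE ?pq ?cy.
by rewrite ext_count ?mA.
Qed.

Lemma t_id2_formula p q s t : p \in A -> q \in A -> s \in A -> t \in A ->
  (t_id2 A g p q s t)%:R = \det M *
    (fq (w p - w q) (w p - w q) * fq (w s - w t) (w s - w t)
     - fq (w p - w q) (w s - w t) * fq (w s - w t) (w p - w q)).
Proof.
move=> pA qA sA tA.
set z1 := w p - w q; set z2 := w s - w t.
have H1 : (ntrees A (ext (ext g (s, t)) (p, q)))%:R
    = \det M * ((1 + fq z1 z1) * (1 + fq z2 z2) - fq z1 z2 * fq z2 z1).
  rewrite ntreesE (matrix_tree _ (wf_ext (wf_ext wf sA tA) pA qA) rA).
  rewrite (Pad_set (S' := S) (L' := fun a b => (fun a b => Lap g setT a b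
     + bvec s t a * bvec s t b) a b + bvec p q a * bvec p q b)) //; last first.
    by move=> a b _ _; rewrite Lap_ext Lap_ext.
  rewrite Pad_add Pad_add !zv_bvec -/z1 -/z2 -rank2.
  by rewrite addrAC.
move: H1; rewrite ext_count ?(wf_ext wf sA tA) // ext_count // t_id_ext //.
rewrite !natrD ntrees_det (t_id_formula sA tA) (t_id_formula pA qA) -/z1 -/z2.
move=> H.
have : \det M * (fq z1 z1 * fq z2 z2 - fq z1 z2 * fq z2 z1) = (t_id2 A g p q s t)%:R.
  apply: (@addrI _ (\det M + \det M * fq z2 z2 + \det M * fq z1 z1)).
  rewrite -[in RHS]addrA H; ring.
by move=> ->.
Qed.

End Final.

Unset Implicit Arguments.

Theorem theorem5p1 (V E : finType) (A : {set V}) (g : E -> V * V) :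
  wf_graph A g -> connected_graph A g ->
  (forall s t p q : V, s \in A -> t \in A -> p \in A -> q \in A ->
    (ntrees A g)%:R * (t_id2 A g p q s t)%:R
    = (t_id A g s t)%:R * (t_id A g p q)%:R
      - (1 / 4 : rat) * ((t_id A g p s)%:R - (t_id A g q s)%:R
                         - (t_id A g p t)%:R + (t_id A g q t)%:R) ^+ 2)
  /\
  (forall s p q : V, s \in A -> p \in A -> q \in A ->
    (ntrees A g)%:R * (t_id2 A g p q p s)%:R
    = (t_id A g p s)%:R * (t_id A g p q)%:R
      - (1 / 4 : rat) * ((t_id A g p s)%:R - (t_id A g q s)%:R
                         + (t_id A g p q)%:R) ^+ 2).
Proof.
move=> wf conn; split.
- move=> s t p q sA tA pA qA.
  rewrite (ntrees_det wf sA) (t_id2_formula wf conn sA pA qA sA tA).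
  rewrite !(t_id_formula wf conn sA) //.
  rewrite !fqBl !fqBr.
  rewrite (fq_sym A g s (wv _ q) (wv _ p)) (fq_sym A g s (wv _ s) (wv _ p))
          (fq_sym A g s (wv _ t) (wv _ p)) (fq_sym A g s (wv _ s) (wv _ q))
          (fq_sym A g s (wv _ t) (wv _ q)) (fq_sym A g s (wv _ t) (wv _ s)).
  by field.
- move=> s p q sA pA qA.
  rewrite (ntrees_det wf sA) (t_id2_formula wf conn sA pA qA pA sA).
  rewrite !(t_id_formula wf conn sA) //.
  rewrite !fqBl !fqBr.
  rewrite (fq_sym A g s (wv _ q) (wv _ p)) (fq_sym A g s (wv _ s) (wv _ p))
          (fq_sym A g s (wv _ s) (wv _ q)).
  by field.
Qed.
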